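(* Let $n\ge 1$ be an integer and let $x,\tilde x\in\{0,1\}^n$ with $|x|_1\le|\tilde x|_1$. Let $y$ and $\tilde y$ be random points of $\{0,1\}^n$ obtained from $x$ and $\tilde x$, respectively, by flipping each bit independently with probability $1/n$. Then for every $j\in\{0,\dots,|x|_1-1\}$, $$\Pr\big[|y|_1=j\big]\ge\Pr\big[|\tilde y|_1=j\big].$$
   Context: $|x|_1=\sum_{i=1}^n x_i$ denotes the number of one-bits of $x\in\{0,1\}^n$. *)

(* Defs.v *)
From HB Require Import structures.
From mathcomp Require Import all_boot all_order all_algebra.
Set Implicit Arguments. Unset Strict Implicit. Unset Printing Implicit Defensive.
Import Order.TTheory GRing.Theory Num.Theory.

Definition ones (n : nat) (x : {ffun 'I_n -> bool}) : nat := #|[set i | x i]|.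

Local Open Scope ring_scope.

Definition mut_prob (R : numFieldType) (n : nat) (x y : {ffun 'I_n -> bool}) : R :=
  \prod_(i < n) (if x i == y i then 1 - n%:R^-1 else n%:R^-1).

Definition prob_ones (R : numFieldType) (n : nat) (x : {ffun 'I_n -> bool}) (j : nat) : R :=
  \sum_(y : {ffun 'I_n -> bool} | ones y == j) mut_prob R x y.

(* Main.v *)
Require Import Defs.
From HB Require Import structures.
From mathcomp Require Import all_boot all_order all_algebra.
Import Order.TTheory GRing.Theory Num.Theory.
Set Implicit Arguments. Unset Strict Implicit.
Local Open Scope ring_scope.

Definition lin (R : numFieldType) (c d : R) : {poly R} := c%:P + d%:P * 'X.

Lemma coef_mul_lin (R : numFieldType) (g : {poly R}) (c d : R) k :
  (g * lin c d)`_k = c * g`_k + (if k is k'.+1 then d * g`_k' else 0).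
Proof.
rewrite /lin mulrDr coefD coefMC mulrA coefMX coefMC.
by case: k => [|k] /=; rewrite ?addr0 mulrC // [_ * d]mulrC.
Qed.

Lemma prob_ones_poly (R : realFieldType) n (x : {ffun 'I_n -> bool}) j :
  let p := (n%:R : R)^-1 in
  prob_ones R x j =
  (\prod_(i < n) (if x i then lin p (1 - p) else lin (1 - p) p))`_j.
Proof.
move=> p.
have -> : \prod_(i < n) (if x i then lin p (1 - p) else lin (1 - p) p) =
  \prod_(i < n) \sum_(b : bool) (if x i == b then 1 - p else p)%:P * 'X^b.
  apply: congr_big => // i _; rewrite big_bool /= /lin expr1 expr0 mulr1.
  by case: (x i) => /=; rewrite addrC.
rewrite bigA_distr_bigA coef_sum /prob_ones big_mkcond /=.
apply: eq_bigr => y _.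
rewrite big_split /= -rmorph_prod prodrXr coefCM coefXn.
have -> : (\sum_(i < n) y i)%N = ones y.
  rewrite /ones -sum1_card [RHS]big_mkcond /=.
  by apply: eq_bigr => i _; rewrite inE; case: (y i).
rewrite eq_sym; case: (_ == _); rewrite ?mulr1 ?mulr0 //.
Qed.

Lemma prod_if (R : numFieldType) n (x : {ffun 'I_n -> bool}) (A B : {poly R}) :
  \prod_(i < n) (if x i then A else B) = A ^+ ones x * B ^+ (n - ones x).
Proof.
rewrite (bigID (fun i => x i)) /=.
rewrite (eq_bigr (fun=> A)); last by move=> i ->.
rewrite [X in _ * X](eq_bigr (fun=> B)); last by move=> i /negbTE ->.
rewrite !prodr_const.
have Hc : #|[set i | x i]| = #|(fun i => x i)|.
  by apply: eq_card => i; rewrite inE.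
rewrite /ones Hc; congr (_ * _ ^+ _).
have H := cardC (fun i => x i); rewrite card_ord in H.
have Hle : (#|(fun i => x i)| <= n)%N by have := max_card (fun i => x i); rewrite card_ord.
by apply/eqP; rewrite -(eqn_add2l #|(fun i => x i)|) H subnKC.
Qed.

Lemma coef_binpow (R : numFieldType) (c d : R) m k :
  ((lin c d) ^+ m)`_k = ('C(m, k))%:R * d ^+ k * c ^+ (m - k).
Proof.
elim: m k => [|m IH] k.
  by rewrite expr0 coef1 bin0n; case: k => [|k] //=; rewrite ?mul1r ?mulr1 // mul0r.
rewrite exprS mulrC coef_mul_lin; case: k => [|k].
  by rewrite IH !bin0 !mul1r subn0 exprS addr0.
rewrite !IH binS natrD !subSS.
case: (ltnP k m) => hk.
  rewrite -(subnSK hk) exprS.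
  rewrite mulrDl !exprS; set u := _ ^+ _; set v := _ ^+ _.
  rewrite mulrDl; congr (_ + _).
    by rewrite [c * _]mulrC !mulrA mulrAC.
  by rewrite !mulrA [d * _]mulrC.
rewrite bin_small ?ltnS // mulr0n !mul0r mulr0 !add0r.
by rewrite exprS !mulrA [d * _]mulrC.
Qed.

Definition monoP (R : numFieldType) (g : {poly R}) m :=
  (forall k, 0 <= g`_k) /\ (forall k, (k < m)%N -> g`_k <= g`_k.+1).

Lemma mono_mul (R : numFieldType) (g : {poly R}) m (c d : R) :
  monoP g m -> 0 <= c -> 0 <= d -> monoP (g * lin c d) m.
Proof.
move=> [g0 gm] c0 d0; split=> [k|k hk]; rewrite !coef_mul_lin.
  by case: k => [|k]; rewrite ?addr0 ?addr_ge0 ?mulr_ge0.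
case: k hk => [|k] hk.
  by rewrite addr0 -[X in X <= _]addr0 lerD ?mulr_ge0 // ler_wpM2l // gm.
by rewrite lerD // ler_wpM2l // gm // ltnW.
Qed.

Lemma nat_ineq m n k : (m < n)%N -> (k < m)%N -> ('C(m, k) <= 'C(m, k.+1) * n.-1)%N.
Proof.
move=> hmn hkm.
apply: (@leq_trans ((m - k) * 'C(m, k))).
  by rewrite leq_pmull // subn_gt0.
rewrite -mul_bin_left mulnC leq_mul2l; apply/orP; right.
by rewrite -ltnS prednK ?(leq_ltn_trans _ hmn) // (leq_trans hkm).
Qed.

Lemma AC1 (R : comPzRingType) (x y z w : R) : x * y * (z * w) = y * w * (x * z).
Proof. by rewrite -!mulrA mulrCA; congr (_ * _); rewrite [z * w]mulrC mulrCA. Qed.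
Lemma AC2 (R : comPzRingType) (x y z w : R) : x * (y * z) * w = z * w * (x * y).
Proof. by rewrite mulrA [RHS]mulrC mulrA. Qed.

Lemma base_mono (R : realFieldType) n m : (m < n)%N ->
  let p := (n%:R : R)^-1 in monoP ((lin p (1 - p)) ^+ m) m.
Proof.
move=> hmn p.
have n0 : (n%:R : R) != 0 by rewrite pnatr_eq0 -lt0n (leq_ltn_trans _ hmn).
have hq : 1 - p = (n.-1)%:R * p.
  have -> : (n.-1)%:R = (n%:R : R) - 1.
    have hn0 : (0 < n)%N by rewrite (leq_ltn_trans _ hmn).
    by rewrite -[in RHS](prednK hn0) -natr1 addrK.
  by rewrite mulrBl mulfV // mul1r.
have p0 : 0 <= p by rewrite invr_ge0 ler0n.
have q0 : 0 <= 1 - p by rewrite hq mulr_ge0 // ler0n.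
split=> [k|k hk]; rewrite !coef_binpow.
  by rewrite !mulr_ge0 ?ler0n ?exprn_ge0.
rewrite -(subnSK hk) exprS [(1 - p) ^+ k.+1]exprS.
set W := (1 - p) ^+ k * p ^+ (m - k.+1).
have -> : 'C(m, k)%:R * (1 - p) ^+ k * (p * p ^+ (m - k.+1)) = W * ('C(m, k)%:R * p).
  by rewrite /W AC1.
have -> : 'C(m, k.+1)%:R * ((1 - p) * (1 - p) ^+ k) * p ^+ (m - k.+1)
   = W * ('C(m, k.+1)%:R * (1 - p)).
  by rewrite /W AC2.
apply: ler_wpM2l; first by rewrite /W mulr_ge0 ?exprn_ge0.
rewrite hq mulrA -natrM ler_wpM2r // ler_nat.
exact: nat_ineq.
Qed.

Lemma S_mono (R : realFieldType) n a b : (a < n)%N ->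
  let p := (n%:R : R)^-1 in monoP ((lin p (1 - p)) ^+ a * (lin (1 - p) p) ^+ b) a.
Proof.
move=> han p.
have n0 : (0 < n)%N by rewrite (leq_ltn_trans _ han).
have p0 : 0 <= p by rewrite invr_ge0 ler0n.
have p1 : p <= 1 by rewrite invf_le1 ?ltr0n // ler1n.
have q0 : 0 <= 1 - p by rewrite subr_ge0.
elim: b => [|b IH]; first by rewrite expr0 mulr1; exact: base_mono.
by rewrite exprSr mulrA; apply: mono_mul.
Qed.

Lemma key (R : realFieldType) n a b j (p : R) : (a + b.+1 = n)%N -> (j < a)%N ->
  p = (n%:R : R)^-1 ->
  ((lin p (1 - p)) ^+ a.+1 * (lin (1 - p) p) ^+ b)`_j <=
  ((lin p (1 - p)) ^+ a * (lin (1 - p) p) ^+ b.+1)`_j.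
Proof.
move=> habn hja hp; subst p; set p := _^-1.
have han : (a < n)%N by rewrite -habn addnS ltnS leq_addr.
have [S0 Sm] := S_mono R b han.
rewrite -/p in S0 Sm.
have a0 : (0 < a)%N by apply: leq_ltn_trans hja.
have n2 : (1 < n)%N by rewrite -habn addnS ltnS addn_gt0 a0.
have p0 : 0 <= p by rewrite invr_ge0 ler0n.
have pq : p <= 1 - p.
  rewrite lerBrDr -mulr2n -mulr_natr ler_pdivrMl ?ltr0n ?mulr1 ?ler_nat //.
  exact: ltnW.
rewrite exprSr mulrAC exprSr mulrA.
set S := lin p (1 - p) ^+ a * _.
rewrite !coef_mul_lin.
case: j hja => [|j] hja.
  by rewrite !addr0 ler_wpM2r.
have -> : 1 - p = p + (1 - p - p) by rewrite [RHS]addrC subrK.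
set r := 1 - p - p.
have r0 : 0 <= r by rewrite subr_ge0.
rewrite !(mulrDl p r) -addrA lerD2l [r * _ + _]addrC lerD2l ler_wpM2l //.
exact: Sm (ltn_trans _ hja).
Qed.

Lemma chain (R : realFieldType) n d a j (p : R) : (a + d <= n)%N -> (j < a)%N ->
  p = (n%:R : R)^-1 ->
  ((lin p (1 - p)) ^+ (a + d) * (lin (1 - p) p) ^+ (n - (a + d)))`_j <=
  ((lin p (1 - p)) ^+ a * (lin (1 - p) p) ^+ (n - a))`_j.
Proof.
move=> + hja hp; elim: d => [|d IH] h; first by rewrite addn0.
have h' : (a + d < n)%N by rewrite -addnS.
apply: le_trans (IH (ltnW h')).
rewrite addnS -(subnSK h').
apply: key hp; last exact: (leq_trans hja (leq_addr _ _)).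
by rewrite subnSK // subnKC // ltnW.
Qed.

Unset Implicit Arguments.
Set Strict Implicit.

Theorem lemma9 (R : realFieldType) (n : nat) (hn : (1 <= n)%N)
  (x xt : {ffun 'I_n -> bool}) (hx : (ones x <= ones xt)%N)
  (j : nat) (hj : (j < ones x)%N) :
  prob_ones R xt j <= prob_ones R x j.
Proof.
rewrite !prob_ones_poly !prod_if.
have hxt : (ones xt <= n)%N.
  by rewrite /ones; have := max_card [set i | xt i]; rewrite card_ord.
rewrite -(subnKC hx).
apply: chain => //; by rewrite subnKC.
Qed.
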